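(* Suppose $(f_0,\dots,f_4)$ is a rational solution of $A_4(\alpha_0,\dots,\alpha_4)$ and some of $f_0,\dots,f_4$ have a pole at $t=\infty$. Then one of the following holds (indices modulo 5): (1) for some $i$, $f_i$ has a pole of first order at $t=\infty$; (2) for some $i$, $f_i,f_{i+1},f_{i+3}$ have a pole of first order at $t=\infty$; (3) for some $i$, $f_i,f_{i+1},f_{i+2}$ have a pole of first order at $t=\infty$; (4) all of $f_0,\dots,f_4$ have a pole of first order at $t=\infty$.
   Context: The $A_4^{(1)}$ Painlevé equation $A_4(\alpha_0,\dots,\alpha_4)$ with complex parameters $\alpha_j$ is the system for five functions $f_0,\dots,f_4$ of $t$ (indices in $\mathbb{Z}/5\mathbb{Z}$, ${}'=d/dt$): $f_j'=f_j(f_{j+1}-f_{j+2}+f_{j+3}-f_{j+4})+\alpha_j$ ($j=0,\dots,4$), $f_0+\dots+f_4=t$; hence $\sum_j\alpha_j=1$. A rational solution is a tuple of rational functions of $t$ satisfying it. *)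

(* Defs.v *)
From HB Require Import structures.
From mathcomp Require Import all_boot all_order all_algebra.
From mathcomp Require Import fraction.
Notation "x %:F" := (@FracField.tofrac _ x).
Set Implicit Arguments. Unset Strict Implicit. Unset Printing Implicit Defensive.
Import Order.TTheory GRing.Theory Num.Theory.
Local Open Scope ring_scope.

(* Rational functions of t over a field C (of complex numbers) are elements of
   the fraction field {fraction {poly C}}; a rational function is presented as
   p / q with p, q polynomials, q <> 0. *)
Definition ratf (C : fieldType) (p q : {poly C}) : {fraction {poly C}} :=
  (p%:F) / (q%:F).

Definition ratd (C : fieldType) (p q : {poly C}) : {fraction {poly C}} :=
  ((p^`() * q - p * q^`())%:F) / ((q * q)%:F).

Definition ratc (C : fieldType) (a : C) : {fraction {poly C}} := (a%:P)%:F.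

Definition sh (j : 'I_5) (k : nat) : 'I_5 := inord ((j + k) %% 5).

Definition A4_rational_solution (C : fieldType) (alpha : 'I_5 -> C)
    (P Q : 'I_5 -> {poly C}) : Prop :=
  (forall j, Q j != 0) /\
  (forall j, ratd (P j) (Q j) =
     ratf (P j) (Q j) *
       (ratf (P (sh j 1)) (Q (sh j 1)) - ratf (P (sh j 2)) (Q (sh j 2))
        + ratf (P (sh j 3)) (Q (sh j 3)) - ratf (P (sh j 4)) (Q (sh j 4)))
     + ratc (alpha j)) /\
  (\sum_(j < 5) ratf (P j) (Q j) = ('X)%:F).

(* p/q (q <> 0) has a pole at t = oo iff deg p > deg q; the pole order is
   deg p - deg q (= size p - size q). *)
Definition pole_at_infty (C : fieldType) (p q : {poly C}) : Prop :=
  (size q < size p)%N.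
Definition simple_pole_at_infty (C : fieldType) (p q : {poly C}) : Prop :=
  size p = (size q).+1.

(* Main.v *)
Require Import Defs.
From HB Require Import structures.
From mathcomp Require Import all_boot all_order all_algebra.
From mathcomp Require Import fraction ring zify.
Import Order.TTheory GRing.Theory Num.Theory.
Local Open Scope ring_scope.

Lemma tofrac_neq0 {C : fieldType} {p : {poly C}} : p != 0 -> p%:F != 0.
Proof. by rewrite tofrac_eq0. Qed.

Lemma ratf_mul (C : fieldType) (p q e : {poly C}) : e != 0 ->
  ratf p q = ratf (p * e) (q * e).
Proof.
move=> e0; rewrite /ratf !tofracM -mulf_div divff ?mulr1 //.
exact: tofrac_neq0.
Qed.

Lemma ratd_mul (C : fieldType) (p q e : {poly C}) : e != 0 ->
  ratd p q = ratd (p * e) (q * e).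
Proof.
move=> e0; rewrite /ratd.
have -> : (p * e)^`() * (q * e) - p * e * (q * e)^`() = (p^`() * q - p * q^`()) * (e * e).
  by rewrite !derivM; ring.
have -> : q * e * (q * e) = (q * q) * (e * e) by ring.
rewrite !tofracM -mulf_div divff ?mulr1 //.
by rewrite mulf_neq0 // tofrac_neq0.
Qed.

Lemma tofrac_inj' (C : fieldType) (p q : {poly C}) : p%:F = q%:F -> p = q.
Proof. by move/eqP; rewrite tofrac_eq => /eqP. Qed.

Lemma alg_aux (K : fieldType) (f a1 a2 a3 a4 c d : K) : d != 0 ->
  (f/d * (a1/d - a2/d + a3/d - a4/d) + c) * (d*d) = f*(a1 - a2 + a3 - a4) + c*(d*d).
Proof. move=> d0; by field. Qed.

Lemma tofrac_expand (R : idomainType) (f0 f1 f2 f3 f4 c dd : R) :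
  (f0 * (f1 - f2 + f3 - f4) + c * dd)%:F = f0%:F * (f1%:F - f2%:F + f3%:F - f4%:F) + c%:F * dd%:F.
Proof. by rewrite tofracD !tofracM tofracB tofracD tofracB. Qed.

Lemma HE_aux (C : fieldType) (f0 f1 f2 f3 f4 D N : {poly C}) (al : C) : D != 0 ->
  N%:F / (D*D)%:F = f0%:F/D%:F * (f1%:F/D%:F - f2%:F/D%:F + f3%:F/D%:F - f4%:F/D%:F) + (al%:P)%:F ->
  N = f0 * (f1 - f2 + f3 - f4) + al%:P * (D*D).
Proof.
move=> D0 h; apply: tofrac_inj'.
have DD0 : (D * D)%:F != 0 by rewrite tofrac_neq0 // mulf_neq0.
rewrite -[LHS](divfK DD0) h.
rewrite tofrac_expand !tofracM; apply: alg_aux; exact: tofrac_neq0.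
Qed.
Require Import Defs.
From HB Require Import structures.
From mathcomp Require Import all_boot all_order all_algebra.
From mathcomp Require Import fraction ring zify.
Import Order.TTheory GRing.Theory Num.Theory.
Local Open Scope ring_scope.

Lemma ord5P (Pr : 'I_5 -> Prop) : Pr (inord 0) -> Pr (inord 1) -> Pr (inord 2) -> Pr (inord 3) -> Pr (inord 4) -> forall j, Pr j.
Proof.
move=> h0 h1 h2 h3 h4 [[|[|[|[|[|k]]]]] Hk] //.
- by have -> : Ordinal Hk = inord 0 by apply/val_inj; rewrite /= inordK.
- by have -> : Ordinal Hk = inord 1 by apply/val_inj; rewrite /= inordK.
- by have -> : Ordinal Hk = inord 2 by apply/val_inj; rewrite /= inordK.
- by have -> : Ordinal Hk = inord 3 by apply/val_inj; rewrite /= inordK.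
- by have -> : Ordinal Hk = inord 4 by apply/val_inj; rewrite /= inordK.
Qed.

Lemma sum5 (R : nmodType) (a : 'I_5 -> R) :
  \sum_(j < 5) a j = a (inord 0) + a (inord 1) + a (inord 2) + a (inord 3) + a (inord 4).
Proof.
rewrite !big_ord_recr big_ord0 /= add0r.
by congr (_ + _ + _ + _ + _); congr a; apply/val_inj; rewrite /= inordK.
Qed.

Lemma shE (k m : nat) : (k < 5)%N -> sh (inord k) m = inord ((k + m) %% 5).
Proof. by move=> hk; rewrite /sh inordK. Qed.

Lemma inordE5 (m n : nat) : (m < 5)%N -> (n < 5)%N -> ((inord m : 'I_5) == inord n) = (m == n).
Proof. by move=> hm hn; rewrite -val_eqE /= !inordK. Qed.

Definition bshape (b : 'I_5 -> bool) : Prop :=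
  (exists i, forall j, b j = (j == i)) \/
  (exists i, forall j, b j = [|| j == i, j == sh i 1 | j == sh i 3]) \/
  (exists i, forall j, b j = [|| j == i, j == sh i 1 | j == sh i 2]) \/
  (forall j, b j).

Lemma comb (C : numClosedFieldType) (a : 'I_5 -> C) :
  (forall j, a j != 0 -> a (sh j 1) - a (sh j 2) + a (sh j 3) - a (sh j 4) = 0) ->
  (exists j, a j != 0) ->
  \sum_(j < 5) a j != 0 /\ bshape (fun j => a j != 0).
Proof.
move=> H [j0 Hj0].
have h0 : a (inord 0) != 0 -> a (inord 1) - a (inord 2) + a (inord 3) - a (inord 4) = 0 by move/H; rewrite /sh !inordK.
have h1 : a (inord 1) != 0 -> a (inord 2) - a (inord 3) + a (inord 4) - a (inord 0) = 0 by move/H; rewrite /sh !inordK.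
have h2 : a (inord 2) != 0 -> a (inord 3) - a (inord 4) + a (inord 0) - a (inord 1) = 0 by move/H; rewrite /sh !inordK.
have h3 : a (inord 3) != 0 -> a (inord 4) - a (inord 0) + a (inord 1) - a (inord 2) = 0 by move/H; rewrite /sh !inordK.
have h4 : a (inord 4) != 0 -> a (inord 0) - a (inord 1) + a (inord 2) - a (inord 3) = 0 by move/H; rewrite /sh !inordK.
have ne : [|| a (inord 0) != 0, a (inord 1) != 0, a (inord 2) != 0, a (inord 3) != 0 | a (inord 4) != 0].
  by move: j0 Hj0; apply: ord5P => ->; rewrite ?orbT.
rewrite sum5.
case: (eqVneq (a (inord 0)) 0) => z0; case: (eqVneq (a (inord 1)) 0) => z1;
case: (eqVneq (a (inord 2)) 0) => z2; case: (eqVneq (a (inord 3)) 0) => z3;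
case: (eqVneq (a (inord 4)) 0) => z4.
- by move: ne; rewrite z0 z1 z2 z3 z4 eqxx.
- split.
  + apply/negP => /eqP S.
    have E : 1%:R * a (inord 4) = (1) * (a (inord 0) + a (inord 1) + a (inord 2) + a (inord 3) + a (inord 4)) + (-2) * (a (inord 0) - a (inord 1) + a (inord 2) - a (inord 3)) + (1) * a (inord 0) + (-3) * a (inord 1) + (1) * a (inord 2) + (-3) * a (inord 3) by ring.
    move: E; rewrite ?S ?(h4 z4) ?z0 ?z1 ?z2 ?z3 ?mulr0 ?addr0 => /eqP.
    by rewrite mulf_eq0 pnatr_eq0 (negbTE z4).
  + left; exists (inord 4); apply: ord5P; rewrite ?z0 ?z1 ?z2 ?z3 ?z4 ?eqxx ?shE // ?inordE5 // ?ltn_mod.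
- split.
  + apply/negP => /eqP S.
    have E : 1%:R * a (inord 3) = (1) * (a (inord 0) + a (inord 1) + a (inord 2) + a (inord 3) + a (inord 4)) + (-2) * (a (inord 4) - a (inord 0) + a (inord 1) - a (inord 2)) + (-3) * a (inord 0) + (1) * a (inord 1) + (-3) * a (inord 2) + (1) * a (inord 4) by ring.
    move: E; rewrite ?S ?(h3 z3) ?z0 ?z1 ?z2 ?z4 ?mulr0 ?addr0 => /eqP.
    by rewrite mulf_eq0 pnatr_eq0 (negbTE z3).
  + left; exists (inord 3); apply: ord5P; rewrite ?z0 ?z1 ?z2 ?z3 ?z4 ?eqxx ?shE // ?inordE5 // ?ltn_mod.
- exfalso.
    have E : 1%:R * a (inord 3) = (-1) * (a (inord 0) - a (inord 1) + a (inord 2) - a (inord 3)) + (1) * a (inord 0) + (-1) * a (inord 1) + (1) * a (inord 2) by ring.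
    move: E; rewrite ?(h3 z3) ?(h4 z4) ?z0 ?z1 ?z2 ?mulr0 ?addr0 => /eqP.
    by rewrite mulf_eq0 pnatr_eq0 (negbTE z3).
- split.
  + apply/negP => /eqP S.
    have E : 1%:R * a (inord 2) = (1) * (a (inord 0) + a (inord 1) + a (inord 2) + a (inord 3) + a (inord 4)) + (-2) * (a (inord 3) - a (inord 4) + a (inord 0) - a (inord 1)) + (1) * a (inord 0) + (-3) * a (inord 1) + (1) * a (inord 3) + (-3) * a (inord 4) by ring.
    move: E; rewrite ?S ?(h2 z2) ?z0 ?z1 ?z3 ?z4 ?mulr0 ?addr0 => /eqP.
    by rewrite mulf_eq0 pnatr_eq0 (negbTE z2).
  + left; exists (inord 2); apply: ord5P; rewrite ?z0 ?z1 ?z2 ?z3 ?z4 ?eqxx ?shE // ?inordE5 // ?ltn_mod.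
- exfalso.
    have E : 1%:R * a (inord 2) = (1) * (a (inord 0) - a (inord 1) + a (inord 2) - a (inord 3)) + (-1) * a (inord 0) + (1) * a (inord 1) + (1) * a (inord 3) by ring.
    move: E; rewrite ?(h2 z2) ?(h4 z4) ?z0 ?z1 ?z3 ?mulr0 ?addr0 => /eqP.
    by rewrite mulf_eq0 pnatr_eq0 (negbTE z2).
- exfalso.
    have E : 1%:R * a (inord 2) = (-1) * (a (inord 4) - a (inord 0) + a (inord 1) - a (inord 2)) + (-1) * a (inord 0) + (1) * a (inord 1) + (1) * a (inord 4) by ring.
    move: E; rewrite ?(h2 z2) ?(h3 z3) ?z0 ?z1 ?z4 ?mulr0 ?addr0 => /eqP.
    by rewrite mulf_eq0 pnatr_eq0 (negbTE z2).
- split.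
  + apply/negP => /eqP S.
    have E : 3%:R * a (inord 2) = (1) * (a (inord 0) + a (inord 1) + a (inord 2) + a (inord 3) + a (inord 4)) + (-2) * (a (inord 3) - a (inord 4) + a (inord 0) - a (inord 1)) + (-3) * (a (inord 4) - a (inord 0) + a (inord 1) - a (inord 2)) + (-1) * (a (inord 0) - a (inord 1) + a (inord 2) - a (inord 3)) + (-1) * a (inord 0) + (-1) * a (inord 1) by ring.
    move: E; rewrite ?S ?(h2 z2) ?(h3 z3) ?(h4 z4) ?z0 ?z1 ?mulr0 ?addr0 => /eqP.
    by rewrite mulf_eq0 pnatr_eq0 (negbTE z2).
  + right; right; left; exists (inord 2); apply: ord5P; rewrite ?z0 ?z1 ?z2 ?z3 ?z4 ?eqxx ?shE // ?inordE5 // ?ltn_mod.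
- split.
  + apply/negP => /eqP S.
    have E : 1%:R * a (inord 1) = (1) * (a (inord 0) + a (inord 1) + a (inord 2) + a (inord 3) + a (inord 4)) + (-2) * (a (inord 2) - a (inord 3) + a (inord 4) - a (inord 0)) + (-3) * a (inord 0) + (1) * a (inord 2) + (-3) * a (inord 3) + (1) * a (inord 4) by ring.
    move: E; rewrite ?S ?(h1 z1) ?z0 ?z2 ?z3 ?z4 ?mulr0 ?addr0 => /eqP.
    by rewrite mulf_eq0 pnatr_eq0 (negbTE z1).
  + left; exists (inord 1); apply: ord5P; rewrite ?z0 ?z1 ?z2 ?z3 ?z4 ?eqxx ?shE // ?inordE5 // ?ltn_mod.
- exfalso.
    have E : 1%:R * a (inord 1) = (-1) * (a (inord 0) - a (inord 1) + a (inord 2) - a (inord 3)) + (1) * a (inord 0) + (1) * a (inord 2) + (-1) * a (inord 3) by ring.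
    move: E; rewrite ?(h1 z1) ?(h4 z4) ?z0 ?z2 ?z3 ?mulr0 ?addr0 => /eqP.
    by rewrite mulf_eq0 pnatr_eq0 (negbTE z1).
- exfalso.
    have E : 1%:R * a (inord 1) = (1) * (a (inord 4) - a (inord 0) + a (inord 1) - a (inord 2)) + (1) * a (inord 0) + (1) * a (inord 2) + (-1) * a (inord 4) by ring.
    move: E; rewrite ?(h1 z1) ?(h3 z3) ?z0 ?z2 ?z4 ?mulr0 ?addr0 => /eqP.
    by rewrite mulf_eq0 pnatr_eq0 (negbTE z1).
- split.
  + apply/negP => /eqP S.
    have E : 1%:R * a (inord 1) = (-1) * (a (inord 0) + a (inord 1) + a (inord 2) + a (inord 3) + a (inord 4)) + (1) * (a (inord 4) - a (inord 0) + a (inord 1) - a (inord 2)) + (-1) * (a (inord 0) - a (inord 1) + a (inord 2) - a (inord 3)) + (3) * a (inord 0) + (3) * a (inord 2) by ring.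
    move: E; rewrite ?S ?(h1 z1) ?(h3 z3) ?(h4 z4) ?z0 ?z2 ?mulr0 ?addr0 => /eqP.
    by rewrite mulf_eq0 pnatr_eq0 (negbTE z1).
  + right; left; exists (inord 3); apply: ord5P; rewrite ?z0 ?z1 ?z2 ?z3 ?z4 ?eqxx ?shE // ?inordE5 // ?ltn_mod.
- exfalso.
    have E : 1%:R * a (inord 1) = (-1) * (a (inord 3) - a (inord 4) + a (inord 0) - a (inord 1)) + (1) * a (inord 0) + (1) * a (inord 3) + (-1) * a (inord 4) by ring.
    move: E; rewrite ?(h1 z1) ?(h2 z2) ?z0 ?z3 ?z4 ?mulr0 ?addr0 => /eqP.
    by rewrite mulf_eq0 pnatr_eq0 (negbTE z1).
- split.
  + apply/negP => /eqP S.
    have E : 1%:R * a (inord 1) = (1) * (a (inord 0) + a (inord 1) + a (inord 2) + a (inord 3) + a (inord 4)) + (-2) * (a (inord 2) - a (inord 3) + a (inord 4) - a (inord 0)) + (-1) * (a (inord 3) - a (inord 4) + a (inord 0) - a (inord 1)) + (1) * (a (inord 0) - a (inord 1) + a (inord 2) - a (inord 3)) + (-3) * a (inord 0) + (-1) * a (inord 3) by ring.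
    move: E; rewrite ?S ?(h1 z1) ?(h2 z2) ?(h4 z4) ?z0 ?z3 ?mulr0 ?addr0 => /eqP.
    by rewrite mulf_eq0 pnatr_eq0 (negbTE z1).
  + right; left; exists (inord 1); apply: ord5P; rewrite ?z0 ?z1 ?z2 ?z3 ?z4 ?eqxx ?shE // ?inordE5 // ?ltn_mod.
- split.
  + apply/negP => /eqP S.
    have E : 3%:R * a (inord 1) = (1) * (a (inord 0) + a (inord 1) + a (inord 2) + a (inord 3) + a (inord 4)) + (-2) * (a (inord 2) - a (inord 3) + a (inord 4) - a (inord 0)) + (-3) * (a (inord 3) - a (inord 4) + a (inord 0) - a (inord 1)) + (-1) * (a (inord 4) - a (inord 0) + a (inord 1) - a (inord 2)) + (-1) * a (inord 0) + (-1) * a (inord 4) by ring.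
    move: E; rewrite ?S ?(h1 z1) ?(h2 z2) ?(h3 z3) ?z0 ?z4 ?mulr0 ?addr0 => /eqP.
    by rewrite mulf_eq0 pnatr_eq0 (negbTE z1).
  + right; right; left; exists (inord 1); apply: ord5P; rewrite ?z0 ?z1 ?z2 ?z3 ?z4 ?eqxx ?shE // ?inordE5 // ?ltn_mod.
- exfalso.
    have E : 1%:R * a (inord 1) = (-1) * (a (inord 3) - a (inord 4) + a (inord 0) - a (inord 1)) + (-1) * (a (inord 4) - a (inord 0) + a (inord 1) - a (inord 2)) + (-1) * (a (inord 0) - a (inord 1) + a (inord 2) - a (inord 3)) + (1) * a (inord 0) by ring.
    move: E; rewrite ?(h1 z1) ?(h2 z2) ?(h3 z3) ?(h4 z4) ?z0 ?mulr0 ?addr0 => /eqP.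
    by rewrite mulf_eq0 pnatr_eq0 (negbTE z1).
- split.
  + apply/negP => /eqP S.
    have E : 1%:R * a (inord 0) = (1) * (a (inord 0) + a (inord 1) + a (inord 2) + a (inord 3) + a (inord 4)) + (-2) * (a (inord 1) - a (inord 2) + a (inord 3) - a (inord 4)) + (1) * a (inord 1) + (-3) * a (inord 2) + (1) * a (inord 3) + (-3) * a (inord 4) by ring.
    move: E; rewrite ?S ?(h0 z0) ?z1 ?z2 ?z3 ?z4 ?mulr0 ?addr0 => /eqP.
    by rewrite mulf_eq0 pnatr_eq0 (negbTE z0).
  + left; exists (inord 0); apply: ord5P; rewrite ?z0 ?z1 ?z2 ?z3 ?z4 ?eqxx ?shE // ?inordE5 // ?ltn_mod.
- exfalso.
    have E : 1%:R * a (inord 0) = (1) * (a (inord 0) - a (inord 1) + a (inord 2) - a (inord 3)) + (1) * a (inord 1) + (-1) * a (inord 2) + (1) * a (inord 3) by ring.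
    move: E; rewrite ?(h0 z0) ?(h4 z4) ?z1 ?z2 ?z3 ?mulr0 ?addr0 => /eqP.
    by rewrite mulf_eq0 pnatr_eq0 (negbTE z0).
- exfalso.
    have E : 1%:R * a (inord 0) = (-1) * (a (inord 4) - a (inord 0) + a (inord 1) - a (inord 2)) + (1) * a (inord 1) + (-1) * a (inord 2) + (1) * a (inord 4) by ring.
    move: E; rewrite ?(h0 z0) ?(h3 z3) ?z1 ?z2 ?z4 ?mulr0 ?addr0 => /eqP.
    by rewrite mulf_eq0 pnatr_eq0 (negbTE z0).
- split.
  + apply/negP => /eqP S.
    have E : 3%:R * a (inord 0) = (1) * (a (inord 0) + a (inord 1) + a (inord 2) + a (inord 3) + a (inord 4)) + (-1) * (a (inord 4) - a (inord 0) + a (inord 1) - a (inord 2)) + (1) * (a (inord 0) - a (inord 1) + a (inord 2) - a (inord 3)) + (1) * a (inord 1) + (-3) * a (inord 2) by ring.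
    move: E; rewrite ?S ?(h0 z0) ?(h3 z3) ?(h4 z4) ?z1 ?z2 ?mulr0 ?addr0 => /eqP.
    by rewrite mulf_eq0 pnatr_eq0 (negbTE z0).
  + right; right; left; exists (inord 3); apply: ord5P; rewrite ?z0 ?z1 ?z2 ?z3 ?z4 ?eqxx ?shE // ?inordE5 // ?ltn_mod.
- exfalso.
    have E : 1%:R * a (inord 0) = (1) * (a (inord 3) - a (inord 4) + a (inord 0) - a (inord 1)) + (1) * a (inord 1) + (-1) * a (inord 3) + (1) * a (inord 4) by ring.
    move: E; rewrite ?(h0 z0) ?(h2 z2) ?z1 ?z3 ?z4 ?mulr0 ?addr0 => /eqP.
    by rewrite mulf_eq0 pnatr_eq0 (negbTE z0).
- split.
  + apply/negP => /eqP S.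
    have E : 1%:R * a (inord 0) = (1) * (a (inord 0) + a (inord 1) + a (inord 2) + a (inord 3) + a (inord 4)) + (1) * (a (inord 3) - a (inord 4) + a (inord 0) - a (inord 1)) + (-1) * (a (inord 0) - a (inord 1) + a (inord 2) - a (inord 3)) + (-1) * a (inord 1) + (-3) * a (inord 3) by ring.
    move: E; rewrite ?S ?(h0 z0) ?(h2 z2) ?(h4 z4) ?z1 ?z3 ?mulr0 ?addr0 => /eqP.
    by rewrite mulf_eq0 pnatr_eq0 (negbTE z0).
  + right; left; exists (inord 4); apply: ord5P; rewrite ?z0 ?z1 ?z2 ?z3 ?z4 ?eqxx ?shE // ?inordE5 // ?ltn_mod.
- split.
  + apply/negP => /eqP S.
    have E : 1%:R * a (inord 0) = (-1) * (a (inord 0) + a (inord 1) + a (inord 2) + a (inord 3) + a (inord 4)) + (1) * (a (inord 3) - a (inord 4) + a (inord 0) - a (inord 1)) + (-1) * (a (inord 4) - a (inord 0) + a (inord 1) - a (inord 2)) + (3) * a (inord 1) + (3) * a (inord 4) by ring.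
    move: E; rewrite ?S ?(h0 z0) ?(h2 z2) ?(h3 z3) ?z1 ?z4 ?mulr0 ?addr0 => /eqP.
    by rewrite mulf_eq0 pnatr_eq0 (negbTE z0).
  + right; left; exists (inord 2); apply: ord5P; rewrite ?z0 ?z1 ?z2 ?z3 ?z4 ?eqxx ?shE // ?inordE5 // ?ltn_mod.
- exfalso.
    have E : 1%:R * a (inord 0) = (1) * (a (inord 3) - a (inord 4) + a (inord 0) - a (inord 1)) + (1) * (a (inord 4) - a (inord 0) + a (inord 1) - a (inord 2)) + (1) * (a (inord 0) - a (inord 1) + a (inord 2) - a (inord 3)) + (1) * a (inord 1) by ring.
    move: E; rewrite ?(h0 z0) ?(h2 z2) ?(h3 z3) ?(h4 z4) ?z1 ?mulr0 ?addr0 => /eqP.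
    by rewrite mulf_eq0 pnatr_eq0 (negbTE z0).
- exfalso.
    have E : 1%:R * a (inord 0) = (-1) * (a (inord 2) - a (inord 3) + a (inord 4) - a (inord 0)) + (1) * a (inord 2) + (-1) * a (inord 3) + (1) * a (inord 4) by ring.
    move: E; rewrite ?(h0 z0) ?(h1 z1) ?z2 ?z3 ?z4 ?mulr0 ?addr0 => /eqP.
    by rewrite mulf_eq0 pnatr_eq0 (negbTE z0).
- split.
  + apply/negP => /eqP S.
    have E : 3%:R * a (inord 0) = (1) * (a (inord 0) + a (inord 1) + a (inord 2) + a (inord 3) + a (inord 4)) + (-2) * (a (inord 1) - a (inord 2) + a (inord 3) - a (inord 4)) + (-3) * (a (inord 2) - a (inord 3) + a (inord 4) - a (inord 0)) + (-1) * (a (inord 0) - a (inord 1) + a (inord 2) - a (inord 3)) + (1) * a (inord 2) + (-3) * a (inord 3) by ring.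
    move: E; rewrite ?S ?(h0 z0) ?(h1 z1) ?(h4 z4) ?z2 ?z3 ?mulr0 ?addr0 => /eqP.
    by rewrite mulf_eq0 pnatr_eq0 (negbTE z0).
  + right; right; left; exists (inord 4); apply: ord5P; rewrite ?z0 ?z1 ?z2 ?z3 ?z4 ?eqxx ?shE // ?inordE5 // ?ltn_mod.
- split.
  + apply/negP => /eqP S.
    have E : 1%:R * a (inord 0) = (1) * (a (inord 0) + a (inord 1) + a (inord 2) + a (inord 3) + a (inord 4)) + (-2) * (a (inord 1) - a (inord 2) + a (inord 3) - a (inord 4)) + (-1) * (a (inord 2) - a (inord 3) + a (inord 4) - a (inord 0)) + (1) * (a (inord 4) - a (inord 0) + a (inord 1) - a (inord 2)) + (-1) * a (inord 2) + (-3) * a (inord 4) by ring.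
    move: E; rewrite ?S ?(h0 z0) ?(h1 z1) ?(h3 z3) ?z2 ?z4 ?mulr0 ?addr0 => /eqP.
    by rewrite mulf_eq0 pnatr_eq0 (negbTE z0).
  + right; left; exists (inord 0); apply: ord5P; rewrite ?z0 ?z1 ?z2 ?z3 ?z4 ?eqxx ?shE // ?inordE5 // ?ltn_mod.
- exfalso.
    have E : 1%:R * a (inord 0) = (-1) * (a (inord 2) - a (inord 3) + a (inord 4) - a (inord 0)) + (1) * (a (inord 4) - a (inord 0) + a (inord 1) - a (inord 2)) + (1) * (a (inord 0) - a (inord 1) + a (inord 2) - a (inord 3)) + (1) * a (inord 2) by ring.
    move: E; rewrite ?(h0 z0) ?(h1 z1) ?(h3 z3) ?(h4 z4) ?z2 ?mulr0 ?addr0 => /eqP.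
    by rewrite mulf_eq0 pnatr_eq0 (negbTE z0).
- split.
  + apply/negP => /eqP S.
    have E : 3%:R * a (inord 0) = (1) * (a (inord 0) + a (inord 1) + a (inord 2) + a (inord 3) + a (inord 4)) + (-2) * (a (inord 1) - a (inord 2) + a (inord 3) - a (inord 4)) + (-3) * (a (inord 2) - a (inord 3) + a (inord 4) - a (inord 0)) + (-1) * (a (inord 3) - a (inord 4) + a (inord 0) - a (inord 1)) + (-1) * a (inord 3) + (-1) * a (inord 4) by ring.
    move: E; rewrite ?S ?(h0 z0) ?(h1 z1) ?(h2 z2) ?z3 ?z4 ?mulr0 ?addr0 => /eqP.
    by rewrite mulf_eq0 pnatr_eq0 (negbTE z0).
  + right; right; left; exists (inord 0); apply: ord5P; rewrite ?z0 ?z1 ?z2 ?z3 ?z4 ?eqxx ?shE // ?inordE5 // ?ltn_mod.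
- exfalso.
    have E : 1%:R * a (inord 0) = (-1) * (a (inord 2) - a (inord 3) + a (inord 4) - a (inord 0)) + (-1) * (a (inord 3) - a (inord 4) + a (inord 0) - a (inord 1)) + (1) * (a (inord 0) - a (inord 1) + a (inord 2) - a (inord 3)) + (1) * a (inord 3) by ring.
    move: E; rewrite ?(h0 z0) ?(h1 z1) ?(h2 z2) ?(h4 z4) ?z3 ?mulr0 ?addr0 => /eqP.
    by rewrite mulf_eq0 pnatr_eq0 (negbTE z0).
- exfalso.
    have E : 1%:R * a (inord 0) = (-1) * (a (inord 2) - a (inord 3) + a (inord 4) - a (inord 0)) + (-1) * (a (inord 3) - a (inord 4) + a (inord 0) - a (inord 1)) + (-1) * (a (inord 4) - a (inord 0) + a (inord 1) - a (inord 2)) + (1) * a (inord 4) by ring.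
    move: E; rewrite ?(h0 z0) ?(h1 z1) ?(h2 z2) ?(h3 z3) ?z4 ?mulr0 ?addr0 => /eqP.
    by rewrite mulf_eq0 pnatr_eq0 (negbTE z0).
- split.
  + apply/negP => /eqP S.
    have E : 5%:R * a (inord 0) = (1) * (a (inord 0) + a (inord 1) + a (inord 2) + a (inord 3) + a (inord 4)) + (-3) * (a (inord 2) - a (inord 3) + a (inord 4) - a (inord 0)) + (-1) * (a (inord 3) - a (inord 4) + a (inord 0) - a (inord 1)) + (1) * (a (inord 4) - a (inord 0) + a (inord 1) - a (inord 2)) + (3) * (a (inord 0) - a (inord 1) + a (inord 2) - a (inord 3)) by ring.
    move: E; rewrite ?S ?(h0 z0) ?(h1 z1) ?(h2 z2) ?(h3 z3) ?(h4 z4) ?mulr0 ?addr0 => /eqP.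
    by rewrite mulf_eq0 pnatr_eq0 (negbTE z0).
  + right; right; right; apply: ord5P; rewrite ?z0 ?z1 ?z2 ?z3 ?z4 ?eqxx ?shE // ?inordE5 // ?ltn_mod.
Qed.
Lemma key_size (C : fieldType) (F D G : {poly C}) (al : C) : D != 0 -> (size D < size F)%N ->
  F^`() * D - F * D^`() = F * G + al%:P * (D * D) -> (size G <= size D)%N.
Proof.
move=> D0 lt H.
have F0 : F != 0 by rewrite -size_poly_eq0; apply/eqP; lia.
have [->|G0] := eqVneq G 0; first by rewrite size_poly0.
have e : F * G = F^`() * D - F * D^`() - al%:P * (D * D) by rewrite H addrK.
have s1 := size_polyMleq F^`() D.
have s2 := size_polyMleq F D^`().
have s3 := size_polyMleq al%:P (D * D).
have s4 := size_polyMleq D D.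
have s5 := size_polyC_leq1 al.
have d1 := lt_size_deriv F0.
have d2 := lt_size_deriv D0.
have a1 := size_polyD (F^`() * D - F * D^`()) (- (al%:P * (D * D))).
have a2 := size_polyD (F^`() * D) (- (F * D^`())).
rewrite !size_polyN in a1 a2.
have := size_mul F0 G0; rewrite e => sm.
have hD : (0 < size D)%N by rewrite size_poly_gt0.
rewrite sm in a1. clear H e sm.
have t1 : (size (F^`() * D)%R <= size F + size D - 2)%N by lia.
have t2 : (size (F * D^`())%R <= size F + size D - 2)%N by lia.
have t3 : (size (al%:P * (D * D))%R <= size F + size D - 2)%N by lia.
have t4 : (size (F^`() * D - F * D^`())%R <= size F + size D - 2)%N by apply: leq_trans a2 _; rewrite geq_max t1 t2.
have t5 : ((size F + size G).-1 <= size F + size D - 2)%N by apply: leq_trans a1 _; rewrite geq_max t4 t3.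
lia.
Qed.
Ltac normsize := repeat match goal with
 | |- context [@size ?T (@polyseq ?R ?p)] => let x := fresh "sz" in set x := @size T (@polyseq R p) in *; clearbody x
 end.
Ltac plia0 := (try (repeat match goal with H : context [predn ?x] |- _ => rewrite -(subn1 x) in H end)); rewrite -?subn1; lia.
Ltac plia := normsize; plia0.

Lemma bridge (pr : 'I_5 -> Prop) (b : 'I_5 -> bool) : (forall j, pr j <-> b j) -> bshape b ->
  ((exists i : 'I_5, forall j, pr j <-> j = i)
   \/ (exists i : 'I_5, forall j, pr j <-> (j = i \/ j = sh i 1 \/ j = sh i 3))
   \/ (exists i : 'I_5, forall j, pr j <-> (j = i \/ j = sh i 1 \/ j = sh i 2))
   \/ (forall j, pr j)).
Proof.
move=> hb [[i Hi]|[[i Hi]|[[i Hi]|Hi]]].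
- by left; exists i => j; rewrite hb Hi; split => /eqP.
- right; left; exists i => j; rewrite hb Hi; split.
    by case/or3P => /eqP ->; auto.
  by case=> [->|[->|->]]; rewrite eqxx ?orbT.
- right; right; left; exists i => j; rewrite hb Hi; split.
    by case/or3P => /eqP ->; auto.
  by case=> [->|[->|->]]; rewrite eqxx ?orbT.
- by right; right; right => j; rewrite hb.
Qed.

Theorem proposition1p1 (C : numClosedFieldType) (alpha : 'I_5 -> C)
    (P Q : 'I_5 -> {poly C}) :
  A4_rational_solution alpha P Q ->
  (exists j, pole_at_infty (P j) (Q j)) ->
  (forall j, pole_at_infty (P j) (Q j) -> simple_pole_at_infty (P j) (Q j)) /\
  ((exists i : 'I_5, forall j,
       pole_at_infty (P j) (Q j) <-> j = i)
   \/ (exists i : 'I_5, forall j,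
       pole_at_infty (P j) (Q j) <-> (j = i \/ j = sh i 1 \/ j = sh i 3))
   \/ (exists i : 'I_5, forall j,
       pole_at_infty (P j) (Q j) <-> (j = i \/ j = sh i 1 \/ j = sh i 2))
   \/ (forall j, pole_at_infty (P j) (Q j))).
Proof.
move=> [Q0 [Heq Hsum]] [j0 Hj0].
pose E : 'I_5 -> {poly C} := fun k : 'I_5 => \prod_(l < 5 | l != k) Q l.
pose D : {poly C} := \prod_(l < 5) Q l.
pose F : 'I_5 -> {poly C} := fun k => P k * E k.
have E0 : forall k, E k != 0 by move=> k; apply/prodf_neq0 => l _; exact: Q0.
have D0 : D != 0 by apply/prodf_neq0 => l _.
have sD0 : (0 < size D)%N by rewrite size_poly_gt0.
have DE : forall k, D = Q k * E k by move=> k; rewrite /D (bigD1 k).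
have Hf : forall k, ratf (P k) (Q k) = (F k)%:F / D%:F.
  by move=> k; rewrite (@ratf_mul _ _ _ _ (E0 k)) -DE.
have Hd : forall k, ratd (P k) (Q k) = ((F k)^`() * D - F k * D^`())%:F / (D * D)%:F.
  by move=> k; rewrite (@ratd_mul _ _ _ _ (E0 k)) -DE.
pose G : 'I_5 -> {poly C} := fun j => F (sh j 1) - F (sh j 2) + F (sh j 3) - F (sh j 4).
have DF0 : D%:F != 0 by rewrite tofrac_neq0.
have HE : forall j, (F j)^`() * D - F j * D^`() = F j * G j + (alpha j)%:P * (D * D).
  by move=> j; apply: HE_aux D0 _; rewrite -Hd Heq !Hf.
have HS : \sum_k F k = 'X * D.
  apply: tofrac_inj'; rewrite tofracM rmorph_sum.
  have h : \sum_k (F k)%:F / D%:F = 'X%:F by rewrite -Hsum; apply: eq_bigr => k _; rewrite Hf.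
  by rewrite -h -mulr_suml divfK.
pose s := fun k => size (F k).
pose M := (\max_(k < 5) s k)%N.
have pole_iff : forall k, pole_at_infty (P k) (Q k) <-> (size D < s k)%N.
  move=> k; rewrite /pole_at_infty /s /F (DE k).
  have e1 : (0 < size (E k))%N by rewrite size_poly_gt0.
  have [->|P0] := eqVneq (P k) 0; first by rewrite mul0r size_poly0.
  rewrite !size_mul //; set x := size (P k); set y := size (Q k); set z := size (E k).
  by split; plia.
have simple_iff : forall k, simple_pole_at_infty (P k) (Q k) <-> s k = (size D).+1.
  move=> k; rewrite /simple_pole_at_infty /s /F (DE k).
  have e1 : (0 < size (E k))%N by rewrite size_poly_gt0.
  have [->|P0] := eqVneq (P k) 0; first by rewrite mul0r size_poly0.
  rewrite !size_mul //; set x := size (P k); set y := size (Q k); set z := size (E k).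
  by split; plia.
have sM : forall k, (s k <= M)%N by move=> k; exact: (leq_bigmax k).
have [k0 Mk0'] := @bigop.eq_bigmax _ s (eq_ind_r (fun n => (0 < n)%N) (isT : (0 < 5)%N) (card_ord 5)).
have Mk0 : M = s k0 by exact: Mk0'.
have DM : (size D < M)%N by have := sM j0; move/pole_iff: Hj0; plia.
pose N := M.-1.
pose a := fun k => (F k)`_N.
have a_iff : forall k, (a k != 0) = (s k == M).
  move=> k; have := sM k; rewrite leq_eqVlt => /orP[/eqP sk|sk].
    rewrite sk eqxx /a /N -sk /s -lead_coefE lead_coef_eq0 -size_poly_eq0.
    by apply/eqP; rewrite -/(s k); plia.
  rewrite /a nth_default; first by rewrite eqxx (ltn_eqF sk).
  by rewrite /N -/(s k); plia.
have hcons : forall j, a j != 0 -> a (sh j 1) - a (sh j 2) + a (sh j 3) - a (sh j 4) = 0.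
  move=> j; rewrite a_iff => /eqP sj.
  have sG : (size D < size (F j))%N -> (size (G j) <= size D)%N := fun h => @key_size _ _ _ _ _ D0 h (HE j).
  have : (G j)`_N = 0 by apply: nth_default; rewrite /N; apply: leq_trans (sG _) _; rewrite -/(s j); plia.
  by rewrite /G !(coefD, coefN) => h; exact: h.
have ex : exists j, a j != 0 by exists k0; rewrite a_iff Mk0.
have [sum0 shp] := @comb _ _ hcons ex.
have M1 : M = (size D).+1.
  move: sum0; rewrite (_ : \sum_j a j = ('X * D)`_N); last by rewrite -HS coef_sum.
  rewrite coefXM (_ : (N == 0)%N = false); last by apply/negbTE; rewrite /N; apply/eqP; plia.
  have [//|/eqP hM] := eqVneq M (size D).+1.
  have hle : (size D <= N.-1)%N by rewrite /N; plia.
  by rewrite (nth_default _ hle) eqxx.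
have key : forall k, pole_at_infty (P k) (Q k) <-> (a k != 0).
  move=> k; rewrite pole_iff a_iff; have := sM k; split; [move=> h; apply/eqP|move/eqP]; plia.
split.
  by move=> k /pole_iff h; apply/simple_iff; have := sM k; plia.
exact: bridge key shp.
Qed.
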